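(* Let $k\ge2$ and $n\le-(k-1)$. Then $$\mathcal{F}_{n,k}(x)=\sum_{t=0}^{\lfloor(|n|+1-k)/k\rfloor}C_k\bigl(-(1+t),\,|n|+1-k(1+t)\bigr)\,x^{|n|+1-k(1+t)}.$$
   Context: For $k\ge2$, the polynomials $\mathcal{F}_{n,k}(x)\in\mathbb{Z}[x]$ ($n\in\mathbb{Z}$) are defined by $\mathcal{F}_{1,k}=1$, $\mathcal{F}_{n,k}=0$ for $n=0,-1,\dots,-(k-2)$, and $\mathcal{F}_{n,k}(x)=\sum_{j=1}^{k}x^{k-j}\mathcal{F}_{n-j,k}(x)$ for all $n\in\mathbb{Z}$. This recurrence is used upwards for $n\ge2$, and downwards for $n\le-(k-1)$ as $\mathcal{F}_{n,k}=\mathcal{F}_{n+k,k}-\sum_{j=1}^{k-1}x^j\mathcal{F}_{n+j,k}$. For integers $m<0$ and $j\ge0$, $C_k(m,j)$ denotes the coefficient of $x^j$ in the formal power series $(1+x+\dots+x^{k-1})^{m}=1/(1+x+\dots+x^{k-1})^{|m|}$. *)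

(* Defs.v *)
From HB Require Import structures.
From mathcomp Require Import all_boot all_order all_algebra.
Set Implicit Arguments. Unset Strict Implicit. Unset Printing Implicit Defensive.
Import Order.TTheory GRing.Theory Num.Theory.
Local Open Scope ring_scope.

Definition Pk (k : nat) : {poly int} := \sum_(i < k) 'X^i.

(* Coefficients 0..n of the formal power series 1/p, for p with p`_0 = 1:
   b_0 = 1, b_m = - sum_{i=1}^m p_i b_(m-i). *)
Fixpoint ser_inv_seq (p : {poly int}) (n : nat) : seq int :=
  match n with
  | 0 => [:: 1]
  | n'.+1 => let s := ser_inv_seq p n' in
      rcons s (- \sum_(1 <= i < n'.+2) p`_i * s`_(n'.+1 - i))
  end.

Definition ser_inv_trunc (p : {poly int}) (n : nat) : {poly int} :=
  Poly (ser_inv_seq p n).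

(* C_k(m,j) = coefficient of x^j in (1+x+...+x^(k-1))^m = 1/(1+...+x^(k-1))^|m|
   (m < 0): computed from the truncation to degree j of 1/P_k, raised to |m|. *)
Definition Ck (k : nat) (m : int) (j : nat) : int :=
  ((ser_inv_trunc (Pk k) j) ^+ `|m|%N)`_j.

(* Main.v *)
Require Import Defs.
From HB Require Import structures.
From mathcomp Require Import zify all_boot all_order all_algebra.
Import Order.TTheory GRing.Theory Num.Theory.
Local Open Scope ring_scope.

Lemma size_sis p n : size (ser_inv_seq p n) = n.+1.
Proof. by elim: n => [|n IH] //=; rewrite size_rcons IH. Qed.

Lemma sis_prefix p n d i : (i <= n)%N ->
  (ser_inv_seq p (n + d))`_i = (ser_inv_seq p n)`_i.
Proof.
move=> hi; elim: d => [|d IH]; first by rewrite addn0.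
rewrite addnS /= nth_rcons size_sis ifT ?IH //; lia.
Qed.

Definition bb p i := (ser_inv_seq p i)`_i.

Lemma sis_nth p m i : (i <= m)%N -> (ser_inv_seq p m)`_i = bb p i.
Proof. move=> h; rewrite -(subnKC h) sis_prefix //. Qed.

Lemma bb_rec (p : {poly int}) j : bb p j.+1 = - \sum_(i < j.+1) p`_i.+1 * bb p (j - i).
Proof.
rewrite /bb /= nth_rcons size_sis ltnn eqxx; congr (- _).
rewrite big_add1 /= big_mkord; apply: eq_bigr => i _.
rewrite subSS sis_nth //; lia.
Qed.

Lemma convol (p : {poly int}) (hp : p`_0 = 1) j :
  \sum_(i < j.+1) p`_i * bb p (j - i) = (j == 0)%:R.
Proof.
case: j => [|j]; first by rewrite big_ord1 hp mul1r.
rewrite big_ord_recl hp mul1r subn0 bb_rec /=.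
rewrite (eq_bigr (fun i : 'I_j.+1 => p`_i.+1 * bb p (j - i))) ?addNr //.
Qed.

Lemma coefPk k i : (Pk k)`_i = (i < k)%:R.
Proof.
elim: k => [|k IH]; first by rewrite /Pk big_ord0 coef0.
rewrite /Pk big_ord_recr /= -/(Pk k) coefD IH coefXn.
case: (ltngtP i k) => h.
- by rewrite ltnS (ltnW h) addr0.
- by rewrite ltnS leqNgt h addr0.
- by rewrite h ltnSn add0r.
Qed.

Lemma coef_pow_local (A B : {poly int}) J :
  (forall i, (i <= J)%N -> A`_i = B`_i) ->
  forall s j, (j <= J)%N -> (A ^+ s)`_j = (B ^+ s)`_j.
Proof.
move=> hAB; elim=> [|s IH] j hj; first by rewrite !expr0.
rewrite !exprS !coefM; apply: eq_bigr => i _.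
rewrite hAB ?IH //; have := ltn_ord i; lia.
Qed.

Definition cc k s j := ((ser_inv_trunc (Pk k) j) ^+ s)`_j.

Lemma coefT k N i : (i <= N)%N -> (ser_inv_trunc (Pk k) N)`_i = bb (Pk k) i.
Proof. by move=> h; rewrite /ser_inv_trunc coef_Poly sis_nth. Qed.

Lemma cc_level k s j N : (j <= N)%N ->
  cc k s j = ((ser_inv_trunc (Pk k) N) ^+ s)`_j.
Proof.
move=> hj; rewrite /cc; apply: (@coef_pow_local _ _ j) => // i hi.
rewrite !coefT //; lia.
Qed.

Lemma PT k N a : (0 < k)%N -> (a <= N)%N ->
  (Pk k * ser_inv_trunc (Pk k) N)`_a = (a == 0)%:R.
Proof.
move=> hk ha; rewrite coefM -(@convol (Pk k)); last by rewrite coefPk hk.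
apply: eq_bigr => i _; rewrite coefT //; lia.
Qed.

Lemma convC k s e : (0 < k)%N ->
  \sum_(i < k) (if (e < i)%N then 0 else cc k s.+1 (e - i)) = cc k s e.
Proof.
move=> hk; set T := ser_inv_trunc (Pk k) e.
transitivity ((Pk k * T ^+ s.+1)`_e).
  rewrite /Pk mulr_suml coef_sum; apply: eq_bigr => i _; rewrite coefXnM.
  case: ifP => // h; rewrite (cc_level _ _ _ e) //; lia.
rewrite exprS mulrA coefM big_ord_recl PT // subn0 big1 ?addr0 ?mul1r.
  by rewrite (cc_level _ _ _ _ (leqnn e)).
move=> i _; rewrite lift0 PT // ?mul0r //.
Qed.

Definition hh k N e : int :=
  if (e <= N)%N && (k %| N - e)%N then cc k ((N - e) %/ k) e else 0.

Lemma cc0 k j : cc k 0 j = (j == 0)%:R.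
Proof. by rewrite /cc expr0 coef1. Qed.

Lemma term_eq k N e i : (i <= e)%N -> (i <= N)%N ->
  hh k (N - i) (e - i) =
  if (e <= N)%N && (k %| N - e)%N then cc k ((N - e) %/ k) (e - i) else 0.
Proof.
move=> hie hiN; rewrite /hh; case: (leqP e N) => h.
  have -> : (e - i <= N - i)%N by lia.
  by have -> : (N - i - (e - i) = N - e)%N by lia.
have -> // : (e - i <= N - i)%N = false.
by apply/negbTE; rewrite -ltnNge; lia.
Qed.

Lemma KI k N e : (2 <= k)%N -> (k <= N)%N ->
  hh k N e = hh k (N - k) e -
    \sum_(1 <= j < k) (if (e < k - j)%N then 0 else hh k (N - (k - j)) (e - (k - j))).
Proof.
move=> hk hN.
rewrite (eq_big_nat _ _ (F2 := fun j => if (e < k - j)%N then 0 else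
   if (e <= N)%N && (k %| N - e)%N then cc k ((N - e) %/ k) (e - (k - j)) else 0));
  last first.
  move=> j hj; case: ifP => // h; rewrite term_eq //; lia.
case hD: ((e <= N)%N && (k %| N - e)%N).
2:{ rewrite big1; last by move=> j _; case: ifP.
    rewrite /hh hD subr0; case: ifP => // /andP [ha hb].
    move: hD; rewrite (_ : (N - e = N - k - e + k)%N); last by lia.
    by rewrite dvdn_addl // hb andbT (_ : (e <= N)%N) //; lia. }
move/andP: hD => [ha hb].
have hNe : (N - e = (N - e) %/ k * k)%N by rewrite divnK.
rewrite /hh ha hb /=.
move: hNe; case: ((N - e) %/ k)%N => [|s] hNe.
  rewrite big_nat_cond big1; last first. { move=> j /andP [/andP [hj1 hj2] _]; case: ifP => // _; rewrite cc0; case: eqP => //; lia. }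
  rewrite cc0 (_ : (e <= N - k)%N = false) /=; last by apply/negbTE; rewrite -ltnNge; lia.
  by case: eqP => //; lia.
have -> : (e <= N - k)%N by lia.
have -> : (N - k - e = s * k)%N by lia.
rewrite dvdn_mull // mulnK; last by lia.
have hC : \sum_(0 <= i < k) (if (e < i)%N then 0 else cc k s.+1 (e - i)) = cc k s e.
  by rewrite big_mkord convC //; lia.
rewrite big_ltn in hC; last by lia.
rewrite /= subn0 big_nat_rev in hC.
by rewrite -hC addrK.
Qed.

Lemma mainF (k : nat) (F : int -> {poly int}) :
  (2 <= k)%N ->
  F 1 = 1 ->
  (forall n : int, 2 - k%:Z <= n <= 0 -> F n = 0) ->
  (forall n : int, F n = \sum_(1 <= j < k.+1) 'X^(k - j) * F (n - j%:Z)) ->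
  forall N e, (F (1 - N%:Z))`_e = hh k N e.
Proof.
move=> hk h1 h0 hrec; elim/ltn_ind => N IH e.
case: (ltnP N k) => hN.
  case: N IH hN => [|N] IH hN.
    rewrite subr0 h1 coef1 /hh; case: e => [|e] //=.
    by rewrite dvdn0 div0n cc0.
  rewrite h0; last by apply/andP; split; lia.
  rewrite coef0 /hh; case: ifP => // /andP [ha hb].
  have h00 : (N.+1 - e = 0)%N.
    case E: (N.+1 - e)%N => [|m] //; rewrite E in hb.
    have := dvdn_leq (ltn0Sn m) hb; lia.
  rewrite h00 div0n cc0; case: eqP => //; lia.
have hr := hrec (1 - N%:Z + k%:Z).
rewrite big_nat_recr /= in hr; last by lia.
rewrite subnn expr0 mul1r in hr.
have -> : 1 - N%:Z = 1 - N%:Z + k%:Z - k%:Z by rewrite addrK.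
rewrite (_ : F (1 - N%:Z + k%:Z - k%:Z) = F (1 - N%:Z + k%:Z) -
   \sum_(1 <= i < k) 'X^(k - i) * F (1 - N%:Z + k%:Z - i%:Z)); last first.
  by rewrite hr; symmetry; rewrite addrC addrK.
rewrite coefB coef_sum (KI _ _ _ hk hN).
rewrite (_ : 1 - N%:Z + k%:Z = 1 - (N - k)%:Z); last by lia.
rewrite IH; last by lia.
congr (_ - _); apply: eq_big_nat => j hj.
rewrite coefXnM; case: ifP => // _.
rewrite (_ : 1 - (N - k)%:Z - j%:Z = 1 - (N - (k - j))%:Z); last by lia.
rewrite IH //; lia.
Qed.

Lemma Ck_cc k t j : Ck k (- t%:Z) j = cc k t j.
Proof. by rewrite /Ck /cc abszN absz_nat. Qed.

Theorem mainTheorem9 (k : nat) (F : int -> {poly int}) :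
  (2 <= k)%N ->
  F 1 = 1 ->
  (forall n : int, 2 - k%:Z <= n <= 0 -> F n = 0) ->
  (forall n : int, F n = \sum_(1 <= j < k.+1) 'X^(k - j) * F (n - j%:Z)) ->
  forall n : int, n <= 1 - k%:Z ->
    F n = \sum_(t < ((`|n|%N + 1 - k) %/ k).+1)
            Ck k (- (1 + t)%:Z) (`|n|%N + 1 - k * (1 + t))%N
              *: 'X^(`|n|%N + 1 - k * (1 + t)).
Proof.
move=> hk h1 h0 hrec n hn.
have hn' : n = 1 - (`|n|%N + 1)%:Z.
  by move: hn; case: n => [m|m] h; [lia | rewrite NegzE /=; lia].
have hNk : (k <= `|n| + 1)%N by move: hn; rewrite {1}hn'; lia.
rewrite {1}hn'; move: (`|n|%N + 1)%N hNk => N hNk {hn hn'}.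
have hk0 : (0 < k)%N by lia.
apply/polyP => e; rewrite (mainF _ _ hk h1 h0 hrec) coef_sum.
under eq_bigr do rewrite coefZ coefXn Ck_cc.
rewrite /hh; case: ifP => [/andP [ha hb] | hD].
  have hNe : (N - e = (N - e) %/ k * k)%N by rewrite divnK.
  move: hNe; case: ((N - e) %/ k)%N => [|s] hNe.
    rewrite cc0 big1; last first.
      by move=> t _; case: eqP => h; [lia | rewrite mulr0].
    by case: eqP => //; lia.
  have hs : (s < ((N - k) %/ k).+1)%N by rewrite ltnS leq_divRL //; lia.
  rewrite (bigD1 (Ordinal hs)) //= big1 ?addr0.
    have -> : (N - k * (1 + s) = e)%N by nia.
    by rewrite eqxx mulr1 add1n.
  move=> t ht; case: eqP => h; last by rewrite mulr0.
  exfalso; move/negP: ht; apply; apply/eqP/val_inj => /=.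
  have := ltn_ord t; rewrite ltnS leq_divRL // => ht2.
  have : (k * (1 + t) == k * (1 + s))%N by apply/eqP; nia.
  by rewrite eqn_pmul2l // eqn_add2l => /eqP.
rewrite big1 // => t _; case: eqP => h; last by rewrite mulr0.
exfalso; have := ltn_ord t; rewrite ltnS leq_divRL // => ht.
move: hD; rewrite (_ : (e <= N)%N) /=; last by lia.
rewrite (_ : (N - e = (1 + t) * k)%N); last by nia.
by rewrite dvdn_mull.
Qed.
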